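(* Let $\mathbf S=\langle S,+,0,\mathscr F\rangle$ be a semilattice with operators, and for $\theta\in\operatorname{Con}\mathbf S$ let $\eta(\theta)$ and $\tau(\theta)$ denote respectively the least and greatest congruences of $\mathbf S$ having the same $0$-class as $\theta$. If congruences $\zeta,\gamma,\chi\in\operatorname{Con}\mathbf S$ satisfy $\eta(\zeta)\le\eta(\gamma)$ and $\tau(\chi)\le\tau(\gamma)$, then \[ \eta\big(\eta(\zeta)\vee\tau(\zeta\wedge\chi)\big)\le\eta(\gamma). \]
   Context: A semilattice with operators is a join semilattice $(S,+)$ with least element $0$ together with a set $\mathscr F$ of unary maps preserving $+$ and $0$; congruences are equivalence relations compatible with $+$ and all $f\in\mathscr F$. If $I$ is the $0$-class of $\theta$, then $x\,\eta(\theta)\,y$ iff $x+i=y+i$ for some $i\in I$, and $x\,\tau(\theta)\,y$ iff for every $h$ in the monoid generated by $\mathscr F$ (including the identity), $h(x)\in I\Leftrightarrow h(y)\in I$. *)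

(* Defs.v *)
Set Implicit Arguments.

Record SLO := {
  carrier :> Type;
  sjoin : carrier -> carrier -> carrier;
  szero : carrier;
  sops : (carrier -> carrier) -> Prop;
  sjoinA : forall x y z, sjoin x (sjoin y z) = sjoin (sjoin x y) z;
  sjoinC : forall x y, sjoin x y = sjoin y x;
  sjoinI : forall x, sjoin x x = x;
  sjoin0 : forall x, sjoin szero x = x;
  sops_join : forall f, sops f -> forall x y, f (sjoin x y) = sjoin (f x) (f y);
  sops_zero : forall f, sops f -> f szero = szero
}.

Definition rel (T : Type) := T -> T -> Prop.

Definition is_con (S : SLO) (r : rel S) : Prop :=
  (forall x, r x x) /\
  (forall x y, r x y -> r y x) /\
  (forall x y z, r x y -> r y z -> r x z) /\
  (forall x y x' y', r x y -> r x' y' -> r (sjoin S x x') (sjoin S y y')) /\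
  (forall f, sops S f -> forall x y, r x y -> r (f x) (f y)).

Definition rle (T : Type) (r s : rel T) : Prop := forall x y, r x y -> s x y.

Definition con_meet (T : Type) (r s : rel T) : rel T := fun x y => r x y /\ s x y.

Definition con_join (S : SLO) (r s : rel S) : rel S :=
  fun x y => forall t : rel S, is_con S t -> rle r t -> rle s t -> t x y.

Inductive in_monoid (S : SLO) : (carrier S -> carrier S) -> Prop :=
  | mon_id : in_monoid S (fun x => x)
  | mon_comp : forall f h, sops S f -> in_monoid S h -> in_monoid S (fun x => f (h x)).

Definition zero_class (S : SLO) (theta : rel S) : S -> Prop :=
  fun i => theta i (szero S).

Definition eta (S : SLO) (theta : rel S) : rel S :=
  fun x y => exists i, zero_class S theta i /\ sjoin S x i = sjoin S y i.

Definition tau (S : SLO) (theta : rel S) : rel S :=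
  fun x y => forall h, in_monoid S h ->
    (zero_class S theta (h x) <-> zero_class S theta (h y)).

(* Main.v *)
Require Import Defs.
From Stdlib Require Import Setoid.

Section H.
Variable S : SLO.
Local Notation "x + y" := (sjoin S x y).
Local Notation "0" := (szero S).

Lemma mon_join h : in_monoid S h -> forall x y, h (x + y) = h x + h y.
Proof. induction 1; intros; simpl; auto. rewrite IHin_monoid. apply sops_join; auto. Qed.

Lemma mon_zero h : in_monoid S h -> h 0 = 0.
Proof. induction 1; simpl; auto. rewrite IHin_monoid. apply sops_zero; auto. Qed.

Lemma mon_con r h : is_con S r -> in_monoid S h -> forall x y, r x y -> r (h x) (h y).
Proof. intros Hr; induction 1; simpl; auto.
  intros. destruct Hr as (_&_&_&_&Hf). apply Hf; auto. Qed.

Lemma mon_compr h f : in_monoid S h -> sops S f -> in_monoid S (fun x => h (f x)).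
Proof. induction 1; intros Hf.
  - exact (@mon_comp S f (fun x => x) Hf (mon_id S)).
  - exact (@mon_comp S f0 (fun x => h (f x)) H (IHin_monoid Hf)). Qed.

Lemma zc_join r u v : is_con S r ->
  (zero_class S r (u + v) <-> zero_class S r u /\ zero_class S r v).
Proof. intros Hr. destruct Hr as (R1&R2&R3&R4&R5). unfold zero_class. split.
  - intros H. assert (Hu : r u (u+v)).
    { assert (E: r (u + 0) (u + (u+v))) by (apply R4; auto).
      rewrite (sjoinC S u 0), sjoin0, sjoinA, sjoinI in E. exact E. }
    assert (Hv : r v (u+v)).
    { assert (E: r (v + 0) (v + (u+v))) by (apply R4; auto).
      rewrite (sjoinC S v 0), sjoin0, (sjoinC S u v), sjoinA, sjoinI, (sjoinC S v u) in E. exact E. }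
    split; eauto.
  - intros [Hu Hv]. assert (E := R4 _ _ _ _ Hu Hv). rewrite sjoin0 in E. exact E. Qed.

Lemma tau_con r : is_con S r -> is_con S (tau S r).
Proof. intros Hr. unfold tau. split; [|split; [|split; [|split]]].
  - intros; tauto.
  - intros x y H h Hh. specialize (H h Hh). tauto.
  - intros x y z H1 H2 h Hh. specialize (H1 h Hh). specialize (H2 h Hh). tauto.
  - intros x y x' y' H1 H2 h Hh. rewrite !(mon_join h Hh), !(zc_join _ _ _ Hr).
    specialize (H1 h Hh). specialize (H2 h Hh). tauto.
  - intros f Hf x y H h Hh. exact (H _ (mon_compr h f Hh Hf)). Qed.

Lemma meet_con r s : is_con S r -> is_con S s -> is_con S (con_meet r s).
Proof. intros (A1&A2&A3&A4&A5) (B1&B2&B3&B4&B5). unfold con_meet.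
  split; [|split; [|split; [|split]]]; intros; firstorder. Qed.
Lemma swap4 u a u' b : (u + a) + (u' + b) = (u + u') + (a + b).
Proof. rewrite !sjoinA. f_equal. rewrite <- !sjoinA. f_equal. apply sjoinC. Qed.
End H.

Theorem theorem6p1 (S : SLO) (zeta gamma chi : rel S) :
  is_con S zeta -> is_con S gamma -> is_con S chi ->
  rle (eta S zeta) (eta S gamma) ->
  rle (tau S chi) (tau S gamma) ->
  rle (eta S (con_join S (eta S zeta) (tau S (con_meet zeta chi)))) (eta S gamma).
Proof.
  intros Hz Hg Hc He Ht x y [i [Hi Exy]]. exists i; split; [|exact Exy].
  set (beta := tau S (con_meet zeta chi)).
  assert (Hm : is_con S (con_meet zeta chi)) by (apply meet_con; auto).
  assert (Hb : is_con S beta) by (apply tau_con; auto).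
  assert (ZG : forall a, zero_class S zeta a -> zero_class S gamma a).
  { intros a Ha. destruct (He a (szero S)) as [j [Hj Ej]].
    { exists a; split; auto. rewrite sjoinI, sjoin0; reflexivity. }
    rewrite sjoin0 in Ej. assert (Q : zero_class S gamma (sjoin S a j)) by (rewrite Ej; exact Hj). exact (proj1 (proj1 (zc_join S gamma a j Hg) Q)). }
  set (t := fun u v => exists a, zero_class S zeta a /\ beta (sjoin S u a) (sjoin S v a)).
  assert (Htc : is_con S t).
  { destruct Hb as (B1&B2&B3&B4&B5). destruct Hz as (Z1&Z2&Z3&Z4&Z5).
    unfold t. split; [|split; [|split; [|split]]].
    - intros u. exists (szero S). split; [apply Z1|apply B1].
    - intros u v [a [Ha H]]. exists a; split; auto.
    - intros u v w [a [Ha H1]] [b [Hb' H2]]. exists (sjoin S a b). split.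
      + apply (proj2 (zc_join S zeta a b (conj Z1 (conj Z2 (conj Z3 (conj Z4 Z5)))))); auto.
      + apply B3 with (sjoin S v (sjoin S a b)).
        * assert (E := B4 _ _ _ _ H1 (B1 b)). rewrite <- !sjoinA in E. exact E.
        * assert (E := B4 _ _ _ _ H2 (B1 a)). rewrite <- !sjoinA in E.
          rewrite (sjoinC S b a) in E. exact E.
    - intros u v u' v' [a [Ha H1]] [b [Hb' H2]]. exists (sjoin S a b). split.
      + apply (proj2 (zc_join S zeta a b (conj Z1 (conj Z2 (conj Z3 (conj Z4 Z5)))))); auto.
      + assert (E := B4 _ _ _ _ H1 H2).
        replace (sjoin S (sjoin S u u') (sjoin S a b))
          with (sjoin S (sjoin S u a) (sjoin S u' b)).
        replace (sjoin S (sjoin S v v') (sjoin S a b))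
          with (sjoin S (sjoin S v a) (sjoin S v' b)). exact E.
        all: apply swap4.
    - intros f Hf u v [a [Ha H]]. exists (f a). split.
      + unfold zero_class in *. rewrite <- (sops_zero S f Hf). apply Z5; auto.
      + rewrite <- !(sops_join S f Hf). apply B5; auto. }
  assert (Ti : t i (szero S)).
  { apply Hi; auto.
    - intros u v [a [Ha E]]. exists a; split; auto. rewrite E. apply (proj1 Hb).
    - intros u v H. exists (szero S). split; [apply (proj1 Hz)|].
      rewrite (sjoinC S u), (sjoinC S v), !sjoin0. exact H. }
  destruct Ti as [a [Ha Hw]]. rewrite sjoin0 in Hw.
  set (w := sjoin S i a) in *.
  assert (Tc : tau S chi w a).
  { intros h Hh. assert (hZ : zero_class S zeta (h a)).
    { unfold zero_class. rewrite <- (mon_zero S h Hh). apply (mon_con S zeta h Hz Hh). exact Ha. }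
    split.
    - intros Hw'. unfold w in Hw'. rewrite (mon_join S h Hh) in Hw'.
      exact (proj2 (proj1 (zc_join S chi _ _ Hc) Hw')).
    - intros Ha'. assert (Q : zero_class S (con_meet zeta chi) (h w)).
      { apply (proj2 (Hw h Hh)). split; auto. }
      exact (proj2 Q). }
  assert (Tg := Ht _ _ Tc _ (mon_id S)). simpl in Tg.
  assert (Gw : zero_class S gamma w) by (apply Tg; apply ZG; auto).
  exact (proj1 (proj1 (zc_join S gamma i a Hg) Gw)).
Qed.
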